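(* Let $X$ be a Hausdorff topological space and $f\colon X\to\mathbb R^n$ a continuous proper map. Suppose $S\subseteq X$ is a dense subset saturated by $f$ (i.e. a union of level sets of $f$) such that $f(S)$ is convex, the fibres of $f|_S$ are connected, and $f|_S\colon S\to f(S)$ is open. Then the fibres of $f$ are connected. *)

(* Defs.v *)
From HB Require Import structures.
From mathcomp Require Import all_boot all_order all_algebra.
From mathcomp Require Import all_classical all_reals all_analysis.
Set Implicit Arguments. Unset Strict Implicit. Unset Printing Implicit Defensive.
Import Order.TTheory GRing.Theory Num.Theory.
Import numFieldNormedType.Exports.
Local Open Scope classical_set_scope.
Local Open Scope ring_scope.

Definition proper_map (X Y : topologicalType) (f : X -> Y) : Prop :=
  forall K : set Y, compact K -> compact (f @^-1` K).

Definition saturated (X Y : Type) (f : X -> Y) (S : set X) : Prop :=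
  forall x x', S x -> f x = f x' -> S x'.

(* The restriction f|_S : S -> f(S) is open, for the subspace topologies:
   open sets of S are U `&` S with U open in X, open sets of f(S) are
   V `&` f(S) with V open in Y. *)
Definition open_restriction (X Y : topologicalType) (f : X -> Y) (S : set X) : Prop :=
  forall U : set X, open U ->
    exists2 V : set Y, open V & f @` (U `&` S) = V `&` f @` S.

(* Main.v *)
Require Import Defs.
From HB Require Import structures.
From mathcomp Require Import all_boot all_order all_algebra.
From mathcomp Require Import all_classical all_reals all_analysis.
Import Order.TTheory GRing.Theory Num.Theory.
Import numFieldNormedType.Exports.
Local Open Scope classical_set_scope.
Local Open Scope ring_scope.

Lemma sep_aux (X : topologicalType) (A : set X) (Phi : set_system X)
  (PF : ProperFilter Phi) :
  compact A ->
  (forall a, A a -> exists2 U, open U /\ U a & exists2 V, Phi V & U `&` V = set0) ->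
  exists2 V, Phi V & A `&` closure V = set0.
Proof.
move=> cA H.
have cov : forall x, A x -> \forall x' \near x & i \near powerset_filter_from Phi,
    (fun i x => ~ closure i x) i x'.
  move=> x Ax; have [U [oU Ux] [V PV UV]] := H x Ax.
  exists (U, [set W | Phi W /\ W `<=` V]).
    split => /=; first exact: open_nbhs_nbhs.
    exact: powerset_filter_fromP.
  case=> x' W /= [Ux' [_ WV]] clW.
  have [z [Wz Uz]] := clW U (open_nbhs_nbhs (conj oU Ux')).
  have : (U `&` V) z by split => //; exact: WV.
  by rewrite UV.
have mono : forall B C : set X, B `<=` C ->
    (A `<=` (fun x => ~ closure C x)) -> (A `<=` (fun x => ~ closure B x)).
  by move=> B C BC HC x Ax clB; apply: (HC x Ax); exact: closureS clB.
have Hn := (proj1 (compact_near_coveringP A) cA) (set X) (powerset_filter_from Phi)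
  (fun i x => ~ closure i x) _ cov.
have [V PV AV] := proj1 (@near_powerset_filter_fromP _ Phi _ mono) (Hn _).
exists V => //.
by apply/disjoints_subset => x Ax; exact: AV.
Qed.

Lemma sep_compact (X : topologicalType) (A B : set X) :
  hausdorff_space X -> compact A -> compact B -> A `&` B = set0 -> A !=set0 ->
  exists U V : set X, [/\ open U, open V, A `<=` U, B `<=` V & U `&` V = set0].
Proof.
move=> hX cA cB AB A0.
have step1 : forall b, B b -> exists2 W, nbhs b W & A `&` closure W = set0.
  move=> b Bb; apply: sep_aux => // a Aa.
  have nab : a != b.
    apply/eqP => ab; have : (A `&` B) a by split => //; rewrite ab.
    by rewrite AB.
  move: hX; rewrite open_hausdorff => /(_ a b nab) [[P Q] /= []].
  rewrite !inE => Pa Qb [oP oQ /eqP PQ].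
  exists P => //; exists Q; last exact/eqP.
  exact: (@open_nbhs_nbhs X b Q).
have step2 : forall b, B b -> exists2 U, open U /\ U b &
    exists2 V, set_nbhs A V & U `&` V = set0.
  move=> b Bb; have [Wb nWb AWb] := step1 b Bb.
  exists (interior Wb); first by split => //; exact: open_interior.
  exists (~` closure Wb).
    apply/set_nbhsP; exists (~` closure Wb); split => //.
      exact/closed_openC/closed_closure.
    by apply/disjoints_subset.
  apply/disjoints_subset => x /interior_subset Wx; rewrite setCK.
  exact: subset_closure.
have [W SW BW] := @sep_aux X B (set_nbhs A) (set_nbhs_pfilter A0) cB step2.
move: SW => /set_nbhsP [C [oC AC CW]].
exists C, (~` closure W); split => //.
- exact/closed_openC/closed_closure.
- by apply/disjoints_subset.
- apply/disjoints_subset => x /CW Wx; rewrite setCK; exact: subset_closure.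
Qed.

Lemma open_disj_sep (X : topologicalType) (U V : set X) :
  open U -> open V -> U `&` V = set0 -> separated U V.
Proof.
move=> oU oV UV; split.
- apply/disjoints_subset => x clx Vx.
  have [z [Uz Vz]] := clx V (@open_nbhs_nbhs X x V (conj oV Vx)).
  by have : (U `&` V) z by []; rewrite UV.
- apply/disjoints_subset => x Ux clx.
  have [z [Vz Uz]] := clx U (@open_nbhs_nbhs X x U (conj oU Ux)).
  by have : (U `&` V) z by []; rewrite UV.
Qed.

Theorem lemma15 (R : realType) (n : nat) (X : topologicalType)
  (f : X -> 'rV[R]_n) (S : set X) :
  hausdorff_space X ->
  continuous f ->
  proper_map f ->
  dense S ->
  saturated f S ->
  convex_set (f @` S : set (convex_lmodType 'rV[R]_n)) ->
  (forall y : 'rV[R]_n, connected (S `&` f @^-1` [set y])) ->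
  open_restriction f S ->
  forall y : 'rV[R]_n, connected (f @^-1` [set y]).
Proof.
move=> hX cf pf dS satS convS connS orS y.
set F := f @^-1` [set y].
have [[s [Ss fsy]]|nS] := pselect (exists s, S s /\ f s = y).
  have -> : F = S `&` F.
    apply/seteqP; split => x; last by case.
    by move=> Fx; split => //; apply: satS Ss _; rewrite fsy Fx.
  exact: connS.
have hR : hausdorff_space 'rV[R]_n := @norm_hausdorff _ _.
have cF : closed F.
  apply: preimage_closed; first by move=> x _; exact: cf.
  exact/accessible_closed_set1/hausdorff_accessible.
have kF : compact F by apply: pf; exact: compact_set1.
apply/connectedP => E [En FE [sep1 sep2]].
have sub b : E b `<=` F by rewrite FE; case: b => x ?; [right|left].
have clE : forall b, closed (E b).
  move=> b x clx.
  have : F x by apply: cF; exact: closureS (sub b) _ clx.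
  rewrite FE; case: b clx => clx [] // Ex.
    by have : (E false `&` closure (E true)) x by []; rewrite sep2.
  by have : (closure (E false) `&` E true) x by []; rewrite sep1.
have kE b : compact (E b) := subclosed_compact (clE b) kF (sub b).
have dE : E false `&` E true = set0 := separated_disjoint (conj sep1 sep2).
have [U0 [U1 [oU0 oU1 EU0 EU1 U01]]] :=
  @sep_compact X _ _ hX (kE false) (kE true) dE (En false).
pose K := closed_ball_ (@Num.norm _ _) y 1.
have kK : compact K.
  apply: bounded_closed_compact; last exact: closed_closed_ball_.
  exists (`|y| + 1); split; first exact: num_real.
  move=> M HM x Kx.
  have -> : x = y - (y - x) by rewrite opprB addrC subrK.
  rewrite /= (le_trans (ler_normB _ _)) // (le_trans _ (ltW HM)) // lerD2l.
  exact: Kx.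
pose T := f @^-1` K `&` ~` (U0 `|` U1).
have kT : compact T.
  apply: compact_closedI; first exact: pf.
  exact/open_closedC/openU.
have kfT : compact (f @` T) := continuous_compact (@continuous_subspaceT _ _ T f cf) kT.
have cfT : closed (f @` T) := compact_closed hR kfT.
have nyT : ~ (f @` T) y.
  case=> x [_ nU] fxy; apply: nU.
  have : F x by [].
  by rewrite FE; case => ?; [left; exact: EU0 | right; exact: EU1].
have : nbhs y (~` f @` T) by apply: open_nbhs_nbhs; split => //; exact: closed_openC.
case/nbhs_ballP => r r0 Hr.
pose r' := Num.min r 1.
have r'0 : 0 < r' by rewrite lt_min r0 ltr01.
have Wsub : forall x, ball y r' (f x) -> U0 x \/ U1 x.
  move=> x bx; apply: contrapT => nU.
  have : (f @` T) (f x).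
    exists x => //; split; last by case => ?; apply: nU; [left|right].
    move: bx; rewrite -ball_normE /ball_ /= lt_min => /andP[_ ?].
    exact: ltW.
  apply: Hr; apply: le_ball bx.
  by rewrite ge_min lexx.
have [e0 E0e0] := En false.
have [e1 E1e1] := En true.
have Fe0 : f e0 = y := sub false e0 E0e0.
have Fe1 : f e1 = y := sub true e1 E1e1.
have oO : forall U, open U -> open (U `&` f @^-1` ball y r').
  move=> U oU; apply: openI => //.
  by apply: open_comp; [move=> x _; exact: cf | exact: ball_open].
have [s0 [[U0s0 bs0] Ss0]] : (U0 `&` f @^-1` ball y r') `&` S !=set0.
  apply: dS; last exact: oO.
  by exists e0; split; [exact: EU0 | rewrite /= Fe0; exact: ballxx].
have [s1 [[U1s1 bs1] Ss1]] : (U1 `&` f @^-1` ball y r') `&` S !=set0.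
  apply: dS; last exact: oO.
  by exists e1; split; [exact: EU1 | rewrite /= Fe1; exact: ballxx].
have [V0 oV0 eV0] := orS _ (oO _ oU0).
have [V1 oV1 eV1] := orS _ (oO _ oU1).
have fS0 : (V0 `&` f @` S) (f s0) by rewrite -eV0; exists s0.
have fS1 : (V1 `&` f @` S) (f s1) by rewrite -eV1; exists s1.
pose z0 := f s0; pose z1 := f s1.
pose g := fun t : R => t *: z0 + (1 - t) *: z1.
have hg : forall t, 0 <= t <= 1 -> (f @` S) (g t) /\ ball y r' (g t).
  move=> t /andP[t0 t1]; split.
    have := convS z0 z1 (Itv01 t0 t1).
    by rewrite !inE; apply; [exists s0 | exists s1].
  move: bs0 bs1; rewrite -!ball_normE /ball_ /= => b0 b1.
  have -> : y - g t = t *: (y - z0) + (1 - t) *: (y - z1).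
    rewrite /g !scalerBr addrACA -scalerDl subrKC scale1r opprD.
    by [].
  rewrite (le_lt_trans (ler_normD _ _)) // !normrZ !ger0_norm ?subr_ge0 //.
  have h0 := normr_ge0 (y - z0); have h1 := normr_ge0 (y - z1).
  have [->|tpos] := eqVneq t 0.
    by rewrite mul0r add0r subr0 mul1r.
  have tp : 0 < t by rewrite lt_neqAle eq_sym tpos.
  have : t * `|y - z0| < t * r' by rewrite ltr_pM2l.
  have : (1 - t) * `|y - z1| <= (1 - t) * r'.
    by rewrite ler_wpM2l ?subr_ge0 // ltW.
  move=> A B; rewrite (lt_le_trans (ltr_leD B A)) //.
  by rewrite -mulrDl addrC subrK mul1r.
have sepU := @open_disj_sep X _ _ oU0 oU1 U01.
have key : forall t, 0 <= t <= 1 ->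
    (V0 (g t) \/ V1 (g t)) /\ ~ (V0 (g t) /\ V1 (g t)).
  move=> t t01; have [[s Ss fs] bg] := hg t t01.
  pose P := S `&` f @^-1` [set g t].
  have PU : P `<=` U0 `|` U1 by move=> x [_ fx]; apply: Wsub; rewrite /= fx.
  have Pc := connected_subset sepU PU (connS (g t)).
  have Ps : P s by [].
  have inV0 : forall x, P x -> U0 x -> V0 (g t).
    move=> x [Sx fx] U0x.
    have : (V0 `&` f @` S) (f x).
      by rewrite -eV0; exists x => //; split => //; split => //; rewrite /= fx.
    by case; rewrite fx.
  have inV1 : forall x, P x -> U1 x -> V1 (g t).
    move=> x [Sx fx] U1x.
    have : (V1 `&` f @` S) (f x).
      by rewrite -eV1; exists x => //; split => //; split => //; rewrite /= fx.
    by case; rewrite fx.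
  have inU0 : V0 (g t) -> exists2 x, P x & U0 x.
    move=> v0; have : (V0 `&` f @` S) (g t) by split => //; exists s.
    by rewrite -eV0 => -[x [[U0x _] Sx] fx]; exists x.
  have inU1 : V1 (g t) -> exists2 x, P x & U1 x.
    move=> v1; have : (V1 `&` f @` S) (g t) by split => //; exists s.
    by rewrite -eV1 => -[x [[U1x _] Sx] fx]; exists x.
  split.
    case: Pc => [PU0|PU1]; [left; apply: (inV0 s) | right; apply: (inV1 s)] => //.
      exact: PU0.
    exact: PU1.
  move=> [v0 v1]; have [x Px U0x] := inU0 v0; have [x' Px' U1x'] := inU1 v1.
  case: Pc => [PU0|PU1].
    have : (U0 `&` U1) x' by split => //; exact: PU0.
    by rewrite U01.
  have : (U0 `&` U1) x by split => //; exact: PU1.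
  by rewrite U01.
have cg : continuous g.
  move=> t.
  have ci : {for t, continuous (fun x : R => x)} by exact: cvg_id.
  have c1 : {for t, continuous (fun x : R => 1 - x)}.
    by apply: continuousB => //; exact: cst_continuous.
  exact: (@continuousD _ _ _ (fun u : R => u *: z0) (fun u : R => (1 - u) *: z1) t
    (continuousZr_tmp ci) (continuousZr_tmp c1)).
have g1 : g 1 = z0 by rewrite /g scale1r subrr scale0r addr0.
have g0 : g 0 = z1 by rewrite /g scale0r add0r subr0 scale1r.
have eq0 : `[0, 1]%classic `&` g @^-1` V0 = `[0, 1]%classic.
  apply: (@segment_connected R 0 1).
- exists 1; split; first by rewrite /= in_itv /= ler01 lexx.
  by rewrite /= g1; case: fS0.
- exists (g @^-1` V0) => //.
  by apply: open_comp => // t _; exact: cg.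
- exists (~` g @^-1` V1).
    by apply/open_closedC/open_comp => // t _; exact: cg.
  apply/seteqP; split => t [It ht].
    split; first exact: It.
    have := (key t); rewrite /= in_itv /= in It; move/(_ It) => [_ K2] v1.
    by apply: K2.
  split; first exact: It.
  have := (key t); rewrite /= in_itv /= in It; move/(_ It) => [[v0|v1] _] //.
have : (`[0, 1]%classic `&` g @^-1` V0) 0.
  by rewrite eq0 /= in_itv /= lexx ler01.
case=> _ v0.
have := key 0; rewrite lexx ler01 => /(_ isT) [_]; apply; split => //.
by rewrite /= g0; case: fS1.
Qed.
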